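(* Let $G$ be a graph, $\theta$ a real number, and $u,v$ two distinct $\theta$-positive vertices of $G$. Then $\mathrm{mult}(\theta,G\setminus\{u,v\})\le\mathrm{mult}(\theta,G)$ if and only if there exists a path $P$ in $G$ from $u$ to $v$ such that $\mathrm{mult}(\theta,G\setminus P)\le\mathrm{mult}(\theta,G)$.
   Context: All graphs are finite and simple. For a graph $G$ on $n$ vertices, let $p(G,r)$ be the number of $r$-matchings of $G$ ($p(G,0)=1$); the matching polynomial is $\mu(G,x)=\sum_{r=0}^{\lfloor n/2\rfloor}(-1)^r p(G,r)x^{n-2r}$ (the graph with no vertices has $\mu=1$). For real $\theta$, $\mathrm{mult}(\theta,G)$ is the multiplicity of $\theta$ as a root of $\mu(G,x)$ (it is $0$ if $\theta$ is not a root). $G\setminus X$ denotes deletion of the vertex set $X$ and its incident edges; for a path $P$, $G\setminus P$ is $G$ with all vertices of $P$ deleted. A vertex $u$ is $\theta$-positive in $G$ if $\mathrm{mult}(\theta,G\setminus\{u\})=\mathrm{mult}(\theta,G)+1$. *)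

(* Defs.v *)
From HB Require Import structures.
From mathcomp Require Import all_boot all_order all_algebra.
Set Implicit Arguments. Unset Strict Implicit. Unset Printing Implicit Defensive.
Import Order.TTheory GRing.Theory Num.Theory.

(* A simple graph is a symmetric irreflexive relation e on a finType T
   (vertex set = all of T).  For S : {set T}, "graph S" below means the
   induced subgraph of (T,e) on S; so G \ X is the induced subgraph on ~: X. *)

Definition is_matching (T : finType) (e : rel T) (S : {set T})
    (M : {set {set T}}) : bool :=
  [forall A in M, [exists a, [exists b,
     [&& A == [set a; b], e a b, a \in S & b \in S]]]] && trivIset M.

Definition nmatch (T : finType) (e : rel T) (S : {set T}) (r : nat) : nat :=
  #|[set M : {set {set T}} | is_matching e S M && (#|M| == r)]|.

Local Open Scope ring_scope.

Definition match_poly (R : nzRingType) (T : finType) (e : rel T)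
    (S : {set T}) : {poly R} :=
  \sum_(r < (#|S| %/ 2).+1)
     ((-1) ^+ r * (nmatch e S r)%:R) *: 'X^(#|S| - r.*2).

Definition mult (R : fieldType) (T : finType) (e : rel T) (theta : R)
    (S : {set T}) : nat :=
  mup theta (match_poly R e S).

Definition theta_positive (R : fieldType) (T : finType) (e : rel T)
    (theta : R) (u : T) : Prop :=
  mult e theta (~: [set u]) = (mult e theta [set: T]).+1.

(* Main.v *)
Require Import Defs.
From HB Require Import structures.
From mathcomp Require Import all_boot all_order all_algebra.
From Stdlib Require Import ClassicalEpsilon.
Set Implicit Arguments. Unset Strict Implicit. Unset Printing Implicit Defensive.
Import Order.TTheory GRing.Theory Num.Theory.

Section Main.
Variables (T : finType) (e : rel T) (e_sym : symmetric e) (e_irr : irreflexive e).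

Definition ms (S : {set T}) (M : {set {set T}}) := is_matching e S M.

Lemma msP (S : {set T}) (M : {set {set T}}) : reflect ((forall A, A \in M -> exists a b,
   [/\ A = [set a; b], e a b, a \in S & b \in S]) /\ trivIset M) (ms S M).
Proof.
apply: (iffP andP) => [[/forall_inP H tM]|[H tM]]; split=> //.
- move=> A /H /existsP[a /existsP[b /and4P[/eqP-> ? ? ?]]]; by exists a, b.
- apply/forall_inP => A /H [a [b [-> ? ? ?]]]; apply/existsP; exists a.
  by apply/existsP; exists b; rewrite eqxx; apply/and4P.
Qed.

Lemma e_neq a b : e a b -> a != b.
Proof. by apply: contraTneq => ->; rewrite e_irr. Qed.

Lemma ms_block (S : {set T}) (M : {set {set T}}) A : ms S M -> A \in M ->
  exists a b, [/\ A = [set a; b], e a b, a \in S & b \in S].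
Proof. by move=> /msP[H _]; apply: H. Qed.

Lemma ms_triv (S : {set T}) (M : {set {set T}}) : ms S M -> trivIset M.
Proof. by case/msP. Qed.

Lemma ms_sub (S : {set T}) (M : {set {set T}}) A : ms S M -> A \in M -> A \subset S.
Proof.
move=> mM /(ms_block mM) [a [b [-> _ aS bS]]].
by apply/subsetP => x; rewrite !inE => /orP[]/eqP->.
Qed.

Lemma ms_card (S : {set T}) (M : {set {set T}}) : ms S M -> (#|M|.*2 <= #|S|)%N.
Proof.
move=> mM; have := ms_triv mM; rewrite /trivIset => /eqP E.
have -> : (#|M|.*2 = \sum_(B in M) #|B|)%N.
  rewrite -muln2 -sum_nat_const; apply: eq_bigr => B BM.
  have [a [b [-> eab _ _]]] := ms_block mM BM.
  by rewrite cards2 (e_neq eab).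
rewrite E; apply: subset_leq_card; apply/subsetP => x /bigcupP[B BM xB].
exact: (subsetP (ms_sub mM BM)).
Qed.

Variable R : rcfType.
Local Open Scope ring_scope.

Definition Fs (S : {set T}) : {poly R} :=
  \sum_(M | ms S M) ((-1) ^+ #|M|) *: 'X^(#|S| - (#|M|).*2).

Lemma match_polyE S : match_poly R e S = Fs S.
Proof.
rewrite /match_poly /Fs.
rewrite [RHS](partition_big (fun M : {set {set T}} => inord #|M| : 'I_(#|S| %/ 2).+1) predT) //=.
apply: eq_bigr => r _.
rewrite /nmatch -[#|[set _ | _]|]sum1_card natr_sum mulr_sumr scaler_suml.
rewrite big_mkcond [RHS]big_mkcond; apply: eq_bigr => M _.
rewrite inE /ms; case mM: (is_matching e S M) => //=.
have lt : (#|M| < (#|S| %/ 2).+1)%N.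
  by rewrite ltnS leq_divRL // muln2 ms_card.
have -> : (inord #|M| == r) = (#|M| == r :> nat).
  by rewrite -val_eqE /= inordK.
case: eqP => [<-|ne] //=.
by rewrite mulr1.
Qed.

Lemma ms0 S : ms S set0.
Proof. apply/msP; split; first by move=> A; rewrite inE.
by apply/trivIsetP => A B; rewrite inE. Qed.

Lemma Fs_coef S : (Fs S)`_#|S| = 1.
Proof.
rewrite /Fs coef_sum (bigD1 set0) ?ms0 //= cards0 expr0 coefZ coefXn subn0 eqxx mulr1.
rewrite big1 ?addr0 // => M /andP[mM Mn0].
rewrite coefZ coefXn.
have c := ms_card mM.
have p : (0 < #|M|)%N.
  by rewrite lt0n cards_eq0.
case: eqP => [E|]; last by rewrite mulr0.
have : (#|S| - #|M|.*2 < #|S|)%N.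
  rewrite ltn_subrL double_gt0 p /=. apply: leq_trans c. by rewrite double_gt0.
by rewrite -E ltnn.
Qed.

Lemma Fs_neq0 S : Fs S != 0.
Proof. apply/eqP => H; have := Fs_coef S; rewrite H coef0 => /eqP.
by rewrite eq_sym oner_eq0. Qed.


Lemma coverP (M : {set {set T}}) x : reflect (exists2 B, B \in M & x \in B) (x \in cover M).
Proof. rewrite /cover; apply: (iffP bigcupP) => [[B ? ?]|[B ? ?]]; by exists B. Qed.

Lemma block_edge (S : {set T}) (M : {set {set T}}) u w : ms S M -> [set u; w] \in M -> [/\ e u w, u \in S & w \in S].
Proof.
move=> mM /(ms_block mM) [a [b [E eab aS bS]]].
have nab := e_neq eab.
have Hu : u \in [set a; b] by rewrite -E !inE eqxx.
have Hw : w \in [set a; b] by rewrite -E !inE eqxx orbT.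
have Ha : a \in [set u; w] by rewrite E !inE eqxx.
have Hb : b \in [set u; w] by rewrite E !inE eqxx orbT.
move: Hu Hw Ha Hb; rewrite !inE.
case/orP=> /eqP ->; case/orP => /eqP ->; rewrite ?eqxx ?orbb //=.
- by move=> _ /eqP E'; move: nab; rewrite E' eqxx.
- by move=> _ _; rewrite e_sym.
- by move=> /eqP E' _; move: nab; rewrite E' eqxx.
Qed.

Lemma block_uniq (S : {set T}) (M : {set {set T}}) u w1 w2 : ms S M -> [set u; w1] \in M -> [set u; w2] \in M -> w1 = w2.
Proof.
move=> mM B1 B2.
have [e1 _ _] := block_edge mM B1.
case: (eqVneq [set u; w1] [set u; w2]) => [E|ne].
  have : w1 \in [set u; w2] by rewrite -E !inE eqxx orbT.
  rewrite !inE => /orP[/eqP E1|/eqP //].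
  by move: e1; rewrite E1 e_irr.
move/trivIsetP: (ms_triv mM) => tM; have := tM _ _ B1 B2 ne.
by move/disjointFr => /(_ u); rewrite !inE eqxx => /(_ isT).
Qed.

Lemma cover_block (S : {set T}) (M : {set {set T}}) u : ms S M -> u \in cover M -> exists w, [set u; w] \in M.
Proof.
move=> mM /coverP[B BM uB].
have [a [b [E _ _ _]]] := ms_block mM BM.
move: uB; rewrite E !inE => /orP[]/eqP ->.
  by exists b; rewrite -E.
by exists a; rewrite setUC -E.
Qed.

Lemma block_cover (M : {set {set T}}) u w : [set u; w] \in M -> u \in cover M.
Proof. by move=> H; apply/coverP; exists [set u; w] => //; rewrite !inE eqxx. Qed.

Lemma ms_del (S : {set T}) (M : {set {set T}}) u : u \in S -> (ms S M && (u \notin cover M)) = ms (S :\ u) M.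
Proof.
move=> uS; apply/idP/idP.
- case/andP=> mM nc; apply/msP; split; last exact: ms_triv mM.
  move=> A AM; have [a [b [E eab aS bS]]] := ms_block mM AM.
  exists a, b; split => //; rewrite !inE ?aS ?bS andbT.
  + by apply: contraNneq nc => <-; apply/coverP; exists A => //; rewrite E !inE eqxx.
  + by apply: contraNneq nc => <-; apply/coverP; exists A => //; rewrite E !inE eqxx orbT.
- move=> mM; apply/andP; split.
  + apply/msP; split; last exact: ms_triv mM.
    move=> A AM; have [a [b [E eab aS bS]]] := ms_block mM AM.
    by exists a, b; split => //; [move: aS | move: bS]; rewrite !inE => /andP[_ ->].
  + apply/negP => /coverP[B BM uB].
    by have := subsetP (ms_sub mM BM) u uB; rewrite !inE eqxx.
Qed.

Lemma ms_add (S : {set T}) (M : {set {set T}}) u w : u \in S -> w \in S -> e u w ->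
  (ms S ([set u; w] |: M) && ([set u; w] \notin M)) = ms (S :\: [set u; w]) M.
Proof.
move=> uS wS euw; apply/idP/idP.
- case/andP=> mM nM; apply/msP; split; last first.
    by apply: trivIsetS (ms_triv mM); apply/subsetP => B BM; rewrite !inE BM orbT.
  move=> A AM.
  have AM' : A \in [set u; w] |: M by rewrite !inE AM orbT.
  have [a [b [E eab aS bS]]] := ms_block mM AM'.
  have ne : [set u; w] != A by apply: contraNneq nM => ->.
  move/trivIsetP: (ms_triv mM) => tM; have dis := tM _ _ (setU11 _ _) AM' ne.
  exists a, b; split => //; rewrite inE ?aS ?bS andbT.
  + by rewrite (disjointFl dis) // E !inE eqxx.
  + by rewrite (disjointFl dis) // E !inE eqxx orbT.
- move=> mM.
  have nM : [set u; w] \notin M.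
    apply/negP => /(ms_sub mM) /subsetP /(_ u); rewrite !inE eqxx /= => /(_ isT).
    by [].

  rewrite nM andbT; apply/msP; split.
    move=> A; rewrite !inE => /orP[/eqP ->|AM]; first by exists u, w.
    have [a [b [E eab aS bS]]] := ms_block mM AM.
    by exists a, b; split => //; [move: aS | move: bS]; rewrite !inE => /andP[_ ->].
  have H1 : {in M, forall B : {set T}, [disjoint [set u; w] & B]}.
    move=> B BM; rewrite disjoint_sym; apply/pred0P => x /=.
    apply/negP => /andP[xB]; have := subsetP (ms_sub mM BM) x xB.
    by rewrite !inE => /andP[/negPf -> _].
  have H2 : set0 \notin M.
    apply/negP => /(ms_block mM) [a [b [E _ _ _]]].
    by have := in_set0 a; rewrite E !inE eqxx.
  by have [] := trivIsetU1 H1 (ms_triv mM) H2.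
Qed.


Lemma Fs_rec (S : {set T}) u : u \in S ->
  Fs S = 'X * Fs (S :\ u) - \sum_(w | (w \in S) && e u w) Fs (S :\: [set u; w]).
Proof.
move=> uS; rewrite /Fs.
set f := fun M : {set {set T}} => (-1) ^+ #|M| *: 'X^(#|S| - (#|M|).*2) : {poly R}.
transitivity (\sum_(M | ms S M) ((if u \notin cover M then f M else 0)
     + \sum_w (if [set u; w] \in M then f M else 0))).
  apply: eq_bigr => M mM; case: (boolP (u \in cover M)) => c /=.
    have [w0 B0] := cover_block mM c.
    rewrite add0r (bigD1 w0) //= B0 big1 ?addr0 // => w nw.
    case: ifP => // Bw; by rewrite (block_uniq mM Bw B0) eqxx in nw.
  rewrite big1 ?addr0 // => w _; case: ifP => // /block_cover.
  by rewrite (negbTE c).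
rewrite big_split /= -big_mkcondr exchange_big /=.
congr (_ + _).
  rewrite mulr_sumr; apply: eq_big => [M|M]; first by rewrite ms_del.
  move=> /andP[mM nc].
  have mM' : ms (S :\ u) M by rewrite -ms_del // mM.
  rewrite /f -scalerAr -exprS; congr (_ *: 'X^_).
  have c := ms_card mM'; move: (cardsD1 u S); rewrite uS add1n => ->.
  by rewrite subSn.
rewrite -sumrN [RHS]big_mkcond; apply: eq_bigr => w _.
case: ifP => [/andP[wS euw]|H]; last first.
  rewrite big1 // => M mM; case: ifP => // /(block_edge mM) [euw _ wS].
  by rewrite wS euw in H.
set B := [set u; w].
rewrite -big_mkcondr.
rewrite (reindex_onto (fun M' => B |: M') (fun M => M :\ B)); last first.
  by move=> M /andP[_ BM]; apply: setD1K.
have EB : forall M' : {set {set T}}, ((B |: M') :\ B == M') = (B \notin M').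
  move=> M'; case: (boolP (B \in M')) => BM /=; last by rewrite setU1K ?eqxx.
  apply/negbTE/negP => /eqP E; move: BM; rewrite -{1}E !inE eqxx.
  by [].
rewrite (eq_bigl (fun M' => ms S (B |: M') && (B \notin M'))); last first.
  by move=> M' /=; rewrite setU11 andbT EB.
rewrite -sumrN; apply: eq_big => [M'|M' /andP[_ nM]]; first by rewrite ms_add.
have nuw := e_neq euw.
rewrite /f cardsU1 nM add1n exprS mulN1r scaleNr; congr (- (_ *: 'X^_)).
rewrite cardsD (setIidPr _); last first.
  by apply/subsetP => x; rewrite !inE => /orP[]/eqP ->.
by rewrite cards2 nuw doubleS -add2n subnDA.
Qed.


Definition valid (S : {set T}) u v (s : seq T) :=
  [&& path e u s, last u s == v, uniq (u :: s) & all (fun x => x \in S) (u :: s)].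

Definition Dp (S : {set T}) u v :=
  Fs (S :\ u) * Fs (S :\ v) - Fs S * Fs (S :\: [set u; v]).

Lemma alg1 (a b X s1 s2 : {poly R}) :
  a * (X * b - s1) - (X * a - s2) * b = s2 * b - a * s1.
Proof.
rewrite mulrBr mulrBl mulrCA -mulrA opprB addrC addrA; congr (_ - _).
by rewrite subrK.
Qed.

Lemma alg2 (I : Type) (r : seq I) (P : pred I) (F G : I -> {poly R}) (a b c : {poly R}) :
  (c + \sum_(i <- r | P i) F i) * b - a * \sum_(i <- r | P i) G i =
  c * b + \sum_(i <- r | P i) (F i * b - a * G i).
Proof. by rewrite mulrDl mulr_suml mulr_sumr -addrA -sumrB. Qed.

Ltac setE := let x := fresh "x" in apply/setP => x; rewrite !inE ?in_cons;
  repeat match goal with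
  | |- context [x == ?y] => case: (x == y)
  | |- context [x \in ?y] => case: (x \in y)
  end; by [].

Lemma HL n : forall S : {set T}, (#|S| <= n)%N -> forall u v, u \in S -> v \in S -> u != v ->
  exists ps : seq (seq T),
    [/\ Dp S u v = \sum_(s <- ps) Fs (S :\: [set x in u :: s]) ^+ 2,
     (forall s, s \in ps -> valid S u v s) & (forall s, valid S u v s -> s \in ps)].
Proof.
elim: n => [|n IH] S cS u v uS vS nuv.
  by move: cS; rewrite leqn0 => /eqP/cards0_eq S0; rewrite S0 inE in uS.
set H := S :\ u.
have cH : (#|H| <= n)%N by move: cS; rewrite (cardsD1 u S) uS add1n ltnS.
have vH : v \in H by rewrite !inE eq_sym nuv vS.
have IHw : forall w, exists ps : seq (seq T), (w \in H) && (w != v) ->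
    [/\ Dp H w v = \sum_(s <- ps) Fs (H :\: [set x in w :: s]) ^+ 2,
     (forall s, s \in ps -> valid H w v s) & (forall s, valid H w v s -> s \in ps)].
  move=> w; case: (boolP ((w \in H) && (w != v))) => [/andP[wH wv]|_]; last by exists [::].
  by have [ps Hps] := IH H cH w v wH vH wv; exists ps.
pose f w := proj1_sig (constructive_indefinite_description _ (IHw w)).
have Hf := fun w => proj2_sig (constructive_indefinite_description _ (IHw w)).
rewrite -/f in Hf.
pose W := enum [set w | (w \in S) && e u w && (w != v)].
exists ((if e u v then [:: [:: v]] else [::]) ++ flatten [seq [seq w :: s | s <- f w] | w <- W]).
split.
- have uSv : u \in S :\ v by rewrite !inE uS andbT; apply: contraNneq nuv => ->.
  rewrite /Dp (Fs_rec uS) (Fs_rec uSv).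
  have -> : S :\ v :\ u = S :\: [set u; v] by setE.
  rewrite alg1.
  have S2 : \sum_(w | (w \in S) && e u w) Fs (S :\: [set u; w]) =
     (if e u v then Fs (S :\: [set u; v]) else 0) +
     \sum_(w | (w \in S) && e u w && (w != v)) Fs (S :\: [set u; w]).
    case: ifP => euv.
      by rewrite (bigD1 v) /= ?vS ?euv.
    rewrite add0r; apply: eq_bigl => w; case: eqVneq => [->|]; by rewrite ?euv ?andbF ?andbT.
  have S1 : \sum_(w | (w \in S :\ v) && e u w) Fs (S :\ v :\: [set u; w]) =
     \sum_(w | (w \in S) && e u w && (w != v)) Fs (S :\ v :\: [set u; w]).
    by apply: eq_bigl => w; rewrite !inE; case: (w != v); rewrite ?andbT ?andbF.
  rewrite S2 S1 alg2.
  rewrite big_cat big_flatten /= big_map.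
  congr (_ + _).
    case: ifP => _; rewrite ?big_nil ?mul0r // big_cons big_nil addr0 expr2.
    by have -> : S :\: [set x in [:: u; v]] = S :\: [set u; v] by setE.
  rewrite /W big_enum; apply: eq_big => [w|w]; first by rewrite inE.
  move=> /andP[/andP[wS euw] wv].
  have wH : w \in H by rewrite !inE wS andbT; apply: contraTneq euw => ->; rewrite e_irr.
  have [idH _ _] := Hf w (introT andP (conj wH wv)).
  rewrite big_map; transitivity (Dp H w v).
    rewrite /Dp /H.
    have -> : S :\ u :\ w = S :\: [set u; w] by setE.
    have -> : S :\ u :\ v = S :\: [set u; v] by setE.
    have -> : S :\ u :\: [set w; v] = S :\ v :\: [set u; w] by setE.
    done.
  rewrite idH; apply: eq_bigr => s _.
  by have -> : H :\: [set x in w :: s] = S :\: [set x in u :: w :: s] by rewrite /H; setE.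
- move=> s; rewrite mem_cat => /orP[|].
    case: ifP => euv; rewrite ?inE // => /eqP ->.
    by rewrite /valid /= euv eqxx /= !inE nuv uS vS.
  move=> /flattenP [l /mapP [w wW ->] /mapP [s' s'f ->]].
  move: wW; rewrite mem_enum inE => /andP[/andP[wS euw] wv].
  have wH : w \in H by rewrite !inE wS andbT; apply: contraTneq euw => ->; rewrite e_irr.
  have [_ snd _] := Hf w (introT andP (conj wH wv)).
  move/and4P: (snd s' s'f) => [P L U A].
  have nu : u \notin w :: s'.
    apply/negP => uin; have := allP A u uin; by rewrite !inE eqxx.
  have AS : all (fun x => x \in S) (w :: s').
    by apply/allP => x /(allP A); rewrite !inE => /andP[].
  rewrite /valid /= euw P L /=.
  move: U AS nu => /= /andP[-> ->] /andP[-> ->] ->; by rewrite uS.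
- case=> [|w s'] V.
    by move/and4P: V => [_ /eqP L _ _]; rewrite /= in L; rewrite L eqxx in nuv.
  move/and4P: V => [/= /andP[euw P] /= L /andP[nu U] /andP[_ A]].
  rewrite mem_cat; apply/orP.
  case: (eqVneq w v) => [wv|wv].
    subst w; left; case: s' P L nu U A => [|y t] P L nu U A.
      by rewrite euw inE.
    move: U => /= /andP[nv _]; move: L => /= /eqP L; have := mem_last y t; rewrite L => vin.
    by rewrite vin in nv.
  right; apply/flattenP; exists [seq w :: s | s <- f w].
    apply/mapP; exists w => //; rewrite mem_enum inE euw wv andbT.
    by move: A => /= /andP[->].
  apply/mapP; exists s' => //.
  have wS : w \in S by move: A => /= /andP[->].
  have wH : w \in H by rewrite !inE wS andbT; apply: contraTneq euw => ->; rewrite e_irr.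
  have [_ _ cmp] := Hf w (introT andP (conj wH wv)).
  apply: cmp; apply/and4P; split => //; apply/allP => x xin; rewrite !inE.
  rewrite (allP (A : all (fun x => x \in S) (w :: s')) x xin) andbT.
  by apply: contraNneq nu => <-.
Qed.


Lemma sos_dvd (c : R) m (ps : seq {poly R}) :
  (forall p, p \in ps -> ('X - c%:P) ^+ m.+1 %| p) ->
  ('X - c%:P) ^+ (m.+1).*2 %| \sum_(p <- ps) p ^+ 2.
Proof.
elim: ps => [|p ps IH] H; first by rewrite big_nil dvdp0.
rewrite big_cons dvdp_add //; last by apply: IH => q qin; apply: H; rewrite inE qin orbT.
by rewrite -addnn exprD expr2 dvdp_mul // H // inE eqxx.
Qed.

Lemma sos_ndvd (c : R) m (ps : seq {poly R}) :
  (forall p, p \in ps -> p != 0) -> (exists2 p, p \in ps & (mup c p <= m)%N) ->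
  ~~ (('X - c%:P) ^+ (m.*2.+1) %| \sum_(p <- ps) p ^+ 2).
Proof.
move=> nz [p0 p0in p0m].
have ex : exists n, has (fun p => mup c p == n) ps.
  by exists (mup c p0); apply/hasP; exists p0.
case: (ex_minnP ex) => k /hasP [p1 p1in /eqP p1k] kmin.
have kle : forall p, p \in ps -> (k <= mup c p)%N.
  by move=> p pin; apply: kmin; apply/hasP; exists p.
have km : (k <= m)%N by apply: leq_trans (kle _ p0in) p0m.
set d := ('X - c%:P) ^+ k.
have dvd : forall p, p \in ps -> d %| p by move=> p pin; rewrite -mup_geq ?nz ?kle.
have E : \sum_(p <- ps) p ^+ 2 = (\sum_(p <- ps) (p %/ d) ^+ 2) * d ^+ 2.
  rewrite mulr_suml big_seq [RHS]big_seq; apply: eq_bigr => p pin.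
  by rewrite -exprMn divpK // dvd.
apply/negP => H.
have H2 : ('X - c%:P) ^+ (k.*2.+1) %| \sum_(p <- ps) p ^+ 2.
  by apply: dvdp_trans H; apply: dvdp_exp2l; rewrite ltnS leq_double.
have dn0 : d ^+ 2 != 0 by rewrite expf_neq0 // expf_neq0 // polyXsubC_eq0.
move: H2; rewrite E exprS (_ : ('X - c%:P) ^+ k.*2 = d ^+ 2); last first.
  by rewrite /d -exprM muln2.
rewrite dvdp_mul2r // dvdp_XsubCl /root horner_sum.
rewrite (big_rem _ p1in) /= horner_exp paddr_eq0 ?sqr_ge0 //; last first.
  by apply: sumr_ge0 => i _; rewrite horner_exp sqr_ge0.
case/andP => /eqP/eqP; rewrite sqrf_eq0 => r1 _.
have : ('X - c%:P) * d %| p1.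
  rewrite -[p1](divpK (dvd _ p1in)); apply: dvdp_mul => //.
  by rewrite dvdp_XsubCl.
rewrite /d -exprS -mup_geq ?nz // p1k ltnn.
by [].
Qed.

End Main.

Theorem lemma6p3 (T : finType) (e : rel T) (e_sym : symmetric e)
    (e_irr : irreflexive e) (R : rcfType) (theta : R) (u v : T) :
  u != v -> theta_positive e theta u -> theta_positive e theta v ->
  ((mult e theta (~: [set u; v]) <= mult e theta [set: T])%N <->
   exists s : seq T,
     [/\ path e u s, last u s = v, uniq (u :: s) &
         (mult e theta (~: [set x in u :: s]) <= mult e theta [set: T])%N]).
Proof.
move=> nuv pu pv.
have ME : forall X, mult e theta X = mup theta (Fs e R X).
  by move=> X; rewrite /mult (match_polyE e_irr).
have nz : forall X, Fs e R X != 0%R := Fs_neq0 e_irr R.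
move: pu pv; rewrite /theta_positive !ME -!setTD.
set m := mup theta (Fs e R [set: T]) => pu pv.
have uT : u \in [set: T] by rewrite in_setT.
have vT : v \in [set: T] by rewrite in_setT.
have [ps [Eq snd cmp]] := HL e_sym e_irr R (leqnn #|[set: T]|) uT vT nuv.
move: Eq; rewrite /Dp => Eq.
set A := (Fs e R ([set: T] :\ u) * Fs e R ([set: T] :\ v))%R in Eq.
set B := (Fs e R [set: T] * Fs e R ([set: T] :\: [set u; v]))%R in Eq.
set c := mup theta (Fs e R ([set: T] :\: [set u; v])).
have mB : mup theta B = (m + c)%N by rewrite mupM.
have dA : (('X - theta%:P) ^+ (m.+1).*2 %| A)%R.
  by rewrite -addnn exprD dvdp_mul // -mup_geq // ?pu ?pv.
set F := fun s => Fs e R ([set: T] :\: [set x in u :: s]).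
have Eq' : (A - B = \sum_(p <- map F ps) p ^+ 2)%R by rewrite big_map.
split.
- move=> cm.
  have ndB : ~~ (('X - theta%:P) ^+ (m.*2.+1) %| B)%R.
    by rewrite -mup_leq ?mulf_neq0 // mB -addnn leq_add2l.
  have ndD : ~~ (('X - theta%:P) ^+ (m.*2.+1) %| A - B)%R.
    rewrite dvdp_subr // (dvdp_trans _ dA) // dvdp_exp2l // -addnn addnS addSn.
  case: (boolP (has (fun s => mup theta (F s) <= m)%N ps)).
    move=> /hasP [s sin sm]; exists s.
    move/and4P: (snd s sin) => [P /eqP L U _]; split => //.
    by rewrite ME -setTD.
  move/hasPn => H; exfalso; move/negP: ndD; apply.
  rewrite Eq'; apply: (@dvdp_trans _ (('X - theta%:P) ^+ (m.+1).*2)%R).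
    by apply: dvdp_exp2l; rewrite doubleS.
  apply: sos_dvd => p /mapP [s sin ->]; rewrite -mup_geq ?nz //.
  by have := H s sin; rewrite leqNgt negbK.
- case=> s [P L U M].
  have V : valid e [set: T] u v s.
    apply/and4P; split => //; first by apply/eqP.
    by apply/allP => x _; rewrite in_setT.
  have sin := cmp s V.
  have nd := @sos_ndvd R theta m (map F ps).
  rewrite -Eq' in nd.
  have nzF : forall p, p \in map F ps -> p != 0%R by move=> p /mapP [s' _ ->]; apply: nz.
  have exF : exists2 p, p \in map F ps & (mup theta p <= m)%N.
    exists (F s); first exact: map_f.
    by move: M; rewrite ME -setTD.
  have {}nd := nd nzF exF.
  rewrite leqNgt; apply/negP => cm; move/negP: nd; apply.
  apply: dvdp_sub.
    apply: dvdp_trans dA; apply: dvdp_exp2l; by rewrite doubleS.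
  by rewrite -mup_geq ?mulf_neq0 // mB -addnn ltn_add2l.
Qed.
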